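(* For every $i \in \mathbb{N}$, the transposition $\sigma_{(i)}$ lies in the bi-immune symmetric group $G_{\mathfrak{B}}$.
   Context: $\mathbb{N}$ denotes the non-negative integers, and $\mathrm{Sym}(\mathbb{N})$ the group of all permutations of $\mathbb{N}$ under composition ($g \circ f$ means apply $f$ first). For $i \in \mathbb{N}$, $\sigma_{(i)}$ is the permutation swapping $i$ and $i+1$ and fixing all other numbers. For $A \subseteq \mathbb{N}$ with increasing enumeration $a_0 < a_1 < \cdots$, define $\sigma_A(x) = \lim_{n \to \infty} (\sigma_{(a_0)} \circ \sigma_{(a_1)} \circ \cdots \circ \sigma_{(a_n)})(x)$ (eventually constant for each $x$). A set $A$ is immune if it is infinite and contains no infinite computably enumerable subset; $A$ is bi-immune if both $A$ and $\mathbb{N} - A$ are immune. For bi-immune $A$, $\sigma_A$ is a permutation of $\mathbb{N}$. The bi-immune symmetric group $G_{\mathfrak{B}}$ is the subgroup of $\mathrm{Sym}(\mathbb{N})$ generated by $\{\sigma_A : A \text{ bi-immune}\}$. *)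

(* Defs.v *)
From Stdlib Require Import Arith List.
Import ListNotations.

(** * A model of computation: partial (mu-)recursive functions.
    Functions act on argument lists (missing arguments read as 0). *)
Inductive rec : Type :=
| RZero : rec
| RSucc : rec
| RProj : nat -> rec
| RComp : rec -> list rec -> rec
| RPrim : rec -> rec -> rec
| RMu   : rec -> rec.

Inductive eval : rec -> list nat -> nat -> Prop :=
| ev_zero xs : eval RZero xs 0
| ev_succ xs : eval RSucc xs (S (nth 0 xs 0))
| ev_proj i xs : eval (RProj i) xs (nth i xs 0)
| ev_comp f gs xs ys y :
    Forall2 (fun g v => eval g xs v) gs ys ->
    eval f ys y -> eval (RComp f gs) xs y
| ev_prim0 f g xs y : eval f xs y -> eval (RPrim f g) (0 :: xs) y
| ev_primS f g n xs r y :
    eval (RPrim f g) (n :: xs) r -> eval g (n :: r :: xs) y ->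
    eval (RPrim f g) (S n :: xs) y
| ev_mu f xs n :
    eval f (n :: xs) 0 ->
    (forall m, m < n -> exists v, v <> 0 /\ eval f (m :: xs) v) ->
    eval (RMu f) xs n.

Definition ce (W : nat -> Prop) : Prop :=
  exists f : rec, forall x, W x <-> exists y, eval f [x] y.

Definition infinite_set (A : nat -> Prop) : Prop :=
  forall n, exists m, n <= m /\ A m.

Definition immune (A : nat -> Prop) : Prop :=
  infinite_set A /\
  forall W, ce W -> (forall x, W x -> A x) -> ~ infinite_set W.

Definition bi_immune (A : nat -> Prop) : Prop :=
  immune A /\ immune (fun x => ~ A x).

Definition transp (i : nat) (x : nat) : nat :=
  if Nat.eqb x i then S i else if Nat.eqb x (S i) then i else x.

Definition increasing_enum (A : nat -> Prop) (a : nat -> nat) : Prop :=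
  (forall n, a n < a (S n)) /\ (forall x, A x <-> exists n, a n = x).

Fixpoint partial_comp (a : nat -> nat) (n : nat) (x : nat) : nat :=
  match n with
  | 0 => transp (a 0) x
  | S m => partial_comp a m (transp (a (S m)) x)
  end.

Definition is_sigma (A : nat -> Prop) (f : nat -> nat) : Prop :=
  exists a, increasing_enum A a /\
    forall x, exists N, forall n, N <= n -> partial_comp a n x = f x.

(** Subgroup of Sym(N) generated by a set S of permutations
    (composition: g o f means f first; equality of permutations is extensional). *)
Inductive generated (S : (nat -> nat) -> Prop) : (nat -> nat) -> Prop :=
| gen_id : generated S (fun x => x)
| gen_base f : S f -> generated S f
| gen_comp f g : generated S f -> generated S g ->
    generated S (fun x => g (f x))
| gen_inv f finv : generated S f ->
    (forall x, finv (f x) = x) -> (forall x, f (finv x) = x) ->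
    generated S finv
| gen_ext f g : generated S f -> (forall x, f x = g x) -> generated S g.

Definition in_G_B (f : nat -> nat) : Prop :=
  generated (fun g => exists A, bi_immune A /\ is_sigma A g) f.

(* Main.v *)
Require Import Defs.
From Stdlib Require Import Arith List Lia Classical ClassicalEpsilon Cantor.
Import ListNotations.

Ltac tsimp := unfold transp; repeat (match goal with |- context [Nat.eqb ?a ?b] => destruct (Nat.eqb_spec a b) end; simpl in *); try lia.

Lemma transp_invol k x : transp k (transp k x) = x.
Proof. unfold transp; destruct (Nat.eqb_spec x k); destruct (Nat.eqb_spec x (S k)); tsimp. Qed.

Lemma transp_fix k x : x < k -> transp k x = x.
Proof. intro. unfold transp. rewrite (proj2 (Nat.eqb_neq x k)) by lia.
  rewrite (proj2 (Nat.eqb_neq x (S k))) by lia. reflexivity. Qed.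

Lemma transp_cases k x : transp k x = x \/ transp k x <= S k.
Proof. unfold transp. destruct (Nat.eqb_spec x k); [right; lia|].
  destruct (Nat.eqb_spec x (S k)); [right; lia|]. left; reflexivity. Qed.

Fixpoint invc (a : nat -> nat) (n : nat) (y : nat) : nat :=
  match n with
  | 0 => transp (a 0) y
  | S m => transp (a (S m)) (invc a m y)
  end.

Lemma strict_mono (f : nat -> nat) : (forall n, f n < f (S n)) -> forall n m, n < m -> f n < f m.
Proof. intros H n m; induction m; intro Hl; [lia|].
  destruct (Nat.eq_dec n m); [subst; apply H|]. specialize (IHm ltac:(lia)). specialize (H m). lia. Qed.

Lemma mono_ge (f : nat -> nat) : (forall n, f n < f (S n)) -> forall n, n <= f n.
Proof. intros H n; induction n; [lia|]. specialize (H n); lia. Qed.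

Section PC.
Variable a : nat -> nat.
Hypothesis Hinc : forall n, a n < a (S n).

Lemma pc_stable x m : x <= m -> partial_comp a m x = partial_comp a x x.
Proof. induction m; intro Hl.
  - assert (x = 0) by lia; subst; reflexivity.
  - destruct (Nat.eq_dec x (S m)); [subst; reflexivity|].
    simpl. rewrite transp_fix. apply IHm; lia.
    pose proof (mono_ge a Hinc (S m)). lia. Qed.

Lemma pc_invc n y : partial_comp a n (invc a n y) = y.
Proof. induction n; simpl; [apply transp_invol|]. rewrite transp_invol. apply IHn. Qed.

Lemma invc_pc n x : invc a n (partial_comp a n x) = x.
Proof. revert x; induction n; intro x; simpl; [apply transp_invol|].
  rewrite IHn. apply transp_invol. Qed.

Hypothesis Hgap : forall n, a n + 2 <= a (S n).

Lemma invc_inv n y : invc a n y = y \/ invc a n y <= S (a n).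
Proof. induction n; simpl.
  - apply transp_cases.
  - destruct IHn as [E|E].
    + rewrite E. apply transp_cases.
    + right. rewrite transp_fix; specialize (Hgap n); lia. Qed.

Lemma invc_step n y : y < a (S n) -> invc a (S n) y = invc a n y.
Proof. intro Hy. simpl. destruct (invc_inv n y) as [E|E].
  - rewrite E. apply transp_fix; auto.
  - apply transp_fix. specialize (Hgap n). lia. Qed.

Lemma invc_stable y m : y <= m -> invc a m y = invc a y y.
Proof. induction m; intro Hl.
  - assert (y = 0) by lia; subst; reflexivity.
  - destruct (Nat.eq_dec y (S m)); [subst; reflexivity|].
    rewrite invc_step. apply IHm; lia.
    pose proof (mono_ge a Hinc (S m)). lia. Qed.

Definition sig x := partial_comp a x x.
Definition isig y := invc a y y.

Lemma sig_isig y : sig (isig y) = y.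
Proof. unfold sig. set (z := isig y). set (m := Nat.max z y).
  rewrite <- (pc_stable z m) by lia. unfold z, isig.
  rewrite <- (invc_stable y m) by lia. apply pc_invc. Qed.

Lemma isig_sig x : isig (sig x) = x.
Proof. unfold isig. set (w := sig x). set (m := Nat.max x w).
  rewrite <- (invc_stable w m) by lia. unfold w, sig.
  rewrite <- (pc_stable x m) by lia. apply invc_pc. Qed.
End PC.

Fixpoint rec_ind2 (P : rec -> Prop) (h0 : P RZero) (h1 : P RSucc) (h2 : forall i, P (RProj i))
  (h3 : forall f gs, P f -> Forall P gs -> P (RComp f gs))
  (h4 : forall f g, P f -> P g -> P (RPrim f g)) (h5 : forall f, P f -> P (RMu f))
  (r : rec) {struct r} : P r :=
  match r with
  | RZero => h0 | RSucc => h1 | RProj i => h2 i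
  | RComp f gs => h3 f gs (rec_ind2 P h0 h1 h2 h3 h4 h5 f)
      ((fix go (l : list rec) : Forall P l :=
          match l with
          | [] => @Forall_nil _ P
          | g :: l' => @Forall_cons _ P g l' (rec_ind2 P h0 h1 h2 h3 h4 h5 g) (go l')
          end) gs)
  | RPrim f g => h4 f g (rec_ind2 P h0 h1 h2 h3 h4 h5 f) (rec_ind2 P h0 h1 h2 h3 h4 h5 g)
  | RMu f => h5 f (rec_ind2 P h0 h1 h2 h3 h4 h5 f)
  end.

Fixpoint enc (r : rec) : nat :=
  match r with
  | RZero => to_nat (0,0) | RSucc => to_nat (1,0) | RProj i => to_nat (2,i)
  | RComp f gs => to_nat (3, to_nat (enc f,
      (fix encl (l : list rec) : nat :=
        match l with [] => 0 | g :: l' => S (to_nat (enc g, encl l')) end) gs))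
  | RPrim f g => to_nat (4, to_nat (enc f, enc g))
  | RMu f => to_nat (5, enc f)
  end.

Fixpoint encl (l : list rec) : nat :=
  match l with [] => 0 | g :: l' => S (to_nat (enc g, encl l')) end.

Lemma enc_comp f gs : enc (RComp f gs) = to_nat (3, to_nat (enc f, encl gs)).
Proof. simpl. f_equal. Qed.

Lemma to_nat_inj p q : to_nat p = to_nat q -> p = q.
Proof. intro H. rewrite <- (cancel_of_to p), <- (cancel_of_to q), H. reflexivity. Qed.

Lemma enc_inj r : forall s, enc r = enc s -> r = s.
Proof.
  induction r using rec_ind2; intros s E; destruct s; rewrite ?enc_comp in E;
    cbn [enc] in E; rewrite ?enc_comp in E; try reflexivity;
    apply to_nat_inj in E; try discriminate; try (injection E; intros; subst; reflexivity).
  - apply (f_equal snd) in E; cbn [snd] in E. apply to_nat_inj in E.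
    pose proof (f_equal fst E) as H1; pose proof (f_equal snd E) as H2; cbn [fst snd] in H1, H2.
    rewrite (IHr _ H1). f_equal. clear IHr H1.
    clear E. revert l H2. induction H as [|g gs Hg Hgs IH]; intros [|g' l] E; cbn [encl] in E; try discriminate; auto.
    apply Nat.succ_inj in E. apply to_nat_inj in E.
    pose proof (f_equal fst E) as E1; pose proof (f_equal snd E) as E2; cbn [fst snd] in E1, E2.
    rewrite (Hg _ E1), (IH _ E2). reflexivity.
  - apply (f_equal snd) in E; cbn [snd] in E. apply to_nat_inj in E.
    pose proof (f_equal fst E) as H1; pose proof (f_equal snd E) as H2; cbn [fst snd] in H1, H2.
    rewrite (IHr1 _ H1), (IHr2 _ H2). reflexivity.
  - apply (f_equal snd) in E; cbn [snd] in E. rewrite (IHr _ E). reflexivity.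
Qed.

Definition Wc (e x : nat) : Prop := exists f, enc f = e /\ exists y, eval f [x] y.

Lemma ce_Wc V : ce V -> exists e, forall x, V x <-> Wc e x.
Proof. intros [f Hf]. exists (enc f). intro x. rewrite Hf. split.
  - intro H. exists f. auto.
  - intros [f' [E H]]. apply enc_inj in E. subst. auto. Qed.

Lemma bi_immune_of (S : nat -> Prop) :
  infinite_set S -> infinite_set (fun x => ~ S x) ->
  (forall e, infinite_set (Wc e) -> exists x y, Wc e x /\ S x /\ Wc e y /\ ~ S y) ->
  bi_immune S.
Proof. intros H1 H2 H3. split; split; auto; intros V HV Hsub Hinf;
  destruct (ce_Wc V HV) as [e He];
  (assert (Hi : infinite_set (Wc e)) by (intro n; destruct (Hinf n) as [m [Hm Vm]]; exists m; split; auto; apply He; auto));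
  destruct (H3 e Hi) as [x [y [Wx [Sx [Wy Sy]]]]].
  - apply Sy. apply Hsub. apply He. auto.
  - apply (Hsub x); auto. apply He; auto.
Qed.

Lemma choice_ex e b : exists pq : nat * nat, b <= fst pq < snd pq /\
  (infinite_set (Wc e) -> Wc e (fst pq) /\ Wc e (snd pq)).
Proof. destruct (classic (infinite_set (Wc e))) as [H|H].
  - destruct (H b) as [p [Hp Wp]]. destruct (H (S p)) as [q [Hq Wq]].
    exists (p, q). simpl. split; [lia|auto].
  - exists (b, S b). simpl. split; [lia|]. intro; contradiction. Qed.

Definition ch (e b : nat) : nat * nat :=
  proj1_sig (constructive_indefinite_description _ (choice_ex e b)).

Lemma ch_spec e b : b <= fst (ch e b) < snd (ch e b) /\
  (infinite_set (Wc e) -> Wc e (fst (ch e b)) /\ Wc e (snd (ch e b))).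
Proof. unfold ch. destruct (constructive_indefinite_description _ _). simpl. auto. Qed.

Section Diag.
Variable s : nat.
Fixpoint bnd (e : nat) : nat :=
  match e with 0 => s | S e' => S (snd (ch e' (bnd e'))) end.
Definition pp e := fst (ch e (bnd e)).
Definition qq e := snd (ch e (bnd e)).

Lemma pq_lt e : bnd e <= pp e < qq e.
Proof. apply ch_spec. Qed.
Lemma qp_lt e : qq e < pp (S e).
Proof. pose proof (pq_lt (S e)). simpl in H. unfold qq. lia. Qed.
Lemma pp_gap e : pp e + 2 <= pp (S e).
Proof. pose proof (pq_lt e). pose proof (qp_lt e). lia. Qed.
Lemma pp_inc e : pp e < pp (S e).
Proof. pose proof (pp_gap e). lia. Qed.
Lemma pp_s e : s <= pp e.
Proof. induction e; [apply (pq_lt 0)|]. pose proof (pp_inc e); lia. Qed.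
Lemma qq_not e e' : pp e' <> qq e.
Proof. intro E. destruct (le_lt_dec e' e).
  - destruct (Nat.eq_dec e' e); [subst; pose proof (pq_lt e); lia|].
    pose proof (strict_mono pp pp_inc e' e ltac:(lia)). pose proof (pq_lt e). lia.
  - pose proof (qp_lt e). destruct (Nat.eq_dec e' (S e)); [subst; lia|].
    pose proof (strict_mono pp pp_inc (S e) e' ltac:(lia)). lia. Qed.
End Diag.

Lemma pc_shift i (a : nat -> nat) m x :
  partial_comp (fun n => match n with 0 => i | S k => a k end) (S m) x = transp i (partial_comp a m x).
Proof. revert x; induction m; intro x; [reflexivity|].
  change (partial_comp (fun n => match n with 0 => i | S k => a k end) (S m) (transp (a (S m)) x)
    = transp i (partial_comp a m (transp (a (S m)) x))). apply IHm. Qed.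

Theorem mainTheorem4 : forall i : nat, in_G_B (transp i).
Proof.
  intro i. set (s := S i).
  set (B := fun x => exists e, pp s e = x).
  set (A := fun x => x = i \/ B x).
  set (a' := fun n => match n with 0 => i | S k => pp s k end).
  assert (Hinc := pp_inc s). assert (Hgap := pp_gap s).
  assert (Hge : forall n, n <= pp s n) by (apply mono_ge; auto).
  assert (HnB : forall e, ~ B (qq s e)) by (intros e [e' E]; exact (qq_not s e e' E)).
  assert (Hqq : forall e, e < qq s e) by (intro e; pose proof (pq_lt s e); pose proof (Hge e); lia).
  assert (Hwit : forall e, infinite_set (Wc e) -> Wc e (pp s e) /\ Wc e (qq s e))
    by (intro e; apply ch_spec).
  assert (BB : bi_immune B).
  { apply bi_immune_of.
    - intro n; exists (pp s n); split; [auto|exists n; auto].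
    - intro n; exists (qq s n); split; [pose proof (Hqq n); lia|apply HnB].
    - intros e He. destruct (Hwit e He). exists (pp s e), (qq s e).
      repeat split; auto; try (exists e; auto); try apply HnB. }
  assert (BA : bi_immune A).
  { apply bi_immune_of.
    - intro n; exists (pp s n); split; [auto|right; exists n; auto].
    - intro n; exists (qq s n); split; [pose proof (Hqq n); lia|].
      intros [E|E]; [|exact (HnB n E)]. pose proof (pq_lt s n); pose proof (pp_s s n). unfold s in *; lia.
    - intros e He. destruct (Hwit e He). exists (pp s e), (qq s e).
      repeat split; auto. right; exists e; auto.
      intros [E|E]; [|exact (HnB e E)]. pose proof (pq_lt s e); pose proof (pp_s s e). unfold s in *; lia. }
  set (sB := sig (pp s)). set (isB := isig (pp s)).
  set (sA := fun x => transp i (sB x)).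
  assert (SB : is_sigma B sB).
  { exists (pp s). split; [split; [auto|intro x; tauto]|].
    intro x. exists x. intros n Hn. apply pc_stable; auto. }
  assert (SA : is_sigma A sA).
  { exists a'. split; [split|].
    - intros [|n]; simpl; [pose proof (pp_s s 0); unfold s in *; lia|auto].
    - intro x; split.
      + intros [E|[e E]]; [exists 0; auto|exists (S e); auto].
      + intros [[|n] E]; simpl in E; [left; auto|right; exists n; auto].
    - intro x. exists (S x). intros [|m] Hm; [lia|]. unfold a'. rewrite pc_shift.
      unfold sA, sB, sig. rewrite pc_stable; auto; lia. }
  unfold in_G_B.
  apply (gen_ext _ (fun x => sA (isB x))).
  - apply gen_comp.
    + apply (gen_inv _ sB). apply gen_base. exists B; auto.
      * intro x. apply isig_sig; auto.
      * intro x. apply sig_isig; auto.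
    + apply gen_base. exists A; auto.
  - intro x. unfold sA, sB, isB. rewrite sig_isig; auto.
Qed.
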